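(* Let $(\Delta,R)$ be a gentle quiver with $f_{(\Delta,R)}=m\cdot[0,3]+[p+m+2,\,p]$ for some $m,p\in\mathbb N$, and let $\alpha\in\Delta_1$. Then $\alpha$ is a branch arrow if and only if $\alpha\notin\mathcal C$, and $\alpha$ is a cycle arrow if and only if $\alpha\in\mathcal C$.
   Context: A quiver $\Delta$ has finite vertex set $\Delta_0$, arrow set $\Delta_1$, maps $s,t$. A path of length $n\ge1$ is $(\alpha_1,\dots,\alpha_n)$ with $s\alpha_i=t\alpha_{i+1}$. A gentle quiver is $(\Delta,R)$ with $\Delta$ connected, $R$ a set of paths of length 2, such that: (1) each vertex is start of at most two arrows and end of at most two arrows; (2) for each arrow $\alpha$ at most one $\beta$ with $s\beta=t\alpha$, $(\beta,\alpha)\notin R$ and at most one $\gamma$ with $t\gamma=s\alpha$, $(\alpha,\gamma)\notin R$; (3) for each $\alpha$ at most one $\beta$ with $(\beta,\alpha)\in R$ and at most one $\gamma$ with $(\alpha,\gamma)\in R$; (4) for some $n$ every path of length $n$ has a subpath in $R$. An arrow $\alpha$ of the connected quiver $\Delta$ is a branch arrow if the quiver obtained by deleting $\alpha$ (keeping all vertices) is not connected; otherwise $\alpha$ is a cycle arrow. Invariant: fix $\sigma,\tau:\Delta_1\to\{\pm1\}$ with distinct arrows of same start having opposite $\sigma$, distinct arrows of same end opposite $\tau$, and for $s\alpha=t\beta$: $(\alpha,\beta)\in R$ iff $\sigma\alpha=\tau\beta$; $\sigma\omega=\sigma\alpha_n,\tau\omega=\tau\alpha_1$. Permitted paths: no consecutive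 pair in $R$, plus trivial $1_{x,\varepsilon}$ ($s=t=x$, $\sigma=\varepsilon,\tau=-\varepsilon$); maximal if no arrow $\alpha$ with $s\alpha=t\omega,\sigma\alpha=-\tau\omega$ and no $\beta$ with $t\beta=s\omega,\tau\beta=-\sigma\omega$; set $\mathcal M$. Antipaths: all consecutive pairs in $R$, plus trivial $1'_{x,\varepsilon}$ ($\sigma=\tau=\varepsilon$); maximal if no $\alpha$ with $s\alpha=t\omega,\sigma\alpha=\tau\omega$ and no $\beta$ with $t\beta=s\omega,\tau\beta=\sigma\omega$; set $\mathcal N$. $\phi:\mathcal M\to\mathcal N$, $\omega\mapsto$ unique $\omega'$ with $t\omega'=t\omega,\tau\omega'=-\tau\omega$; $\psi:\mathcal N\to\mathcal M$, $\omega\mapsto$ unique $\omega'$ with $s\omega'=s\omega,\sigma\omega'=-\sigma\omega$; $\Phi=\phi\psi$; $\Phi$-orbit: $p=|\mathcal O|$, $q=$ total length. $\mathcal C$: set of arrows $\alpha$ such that $(\alpha)$ is not a subpath of a maximal antipath; $\Psi(\alpha)=$ unique $\beta\in\mathcal C$ with $t\beta=s\alpha,\tau\beta=\sigma\alpha$; $\Psi$-orbit: $p=0$, $q=|\mathcal O|$. $f(p,q)=$ number of orbits with these values; $[p,q]$ the characteristic function of $\{(p,q)\}$; sums pointwise. *)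

(* Defs.v *)
From HB Require Import structures.
From mathcomp Require Import all_boot finmap.
From mathcomp Require Import boolp classical_sets cardinality.

Set Implicit Arguments.
Unset Strict Implicit.
Unset Printing Implicit Defensive.

Local Open Scope classical_set_scope.
Local Open Scope fset_scope.

Section GentleQuiver.
Variables (V A : finType) (s t : A -> V).

Definition is_qpath (l : seq A) : bool := sorted (fun a b => s a == t b) l.

Definition qadj (P : pred A) : rel V :=
  fun x y => [exists a, P a && (((s a == x) && (t a == y)) || ((s a == y) && (t a == x)))].

Definition connected_on (P : pred A) : Prop := forall x y : V, connect (qadj P) x y.

Definition qconnected : Prop := connected_on predT.

Definition branch_arrow (al : A) : Prop := ~ connected_on (predC1 al).
Definition cycle_arrow (al : A) : Prop := ~ branch_arrow al.

Variable R : rel A. (* R a b  <->  the length-2 path (a, b) (s a = t b) lies in R *)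

Definition contains_rel (l : seq A) : Prop :=
  exists l1 a b l2, l = l1 ++ a :: b :: l2 /\ R a b.

Definition gentle : Prop :=
  qconnected /\
  [/\ (forall a b, R a b -> s a = t b),
      (forall x, #|[pred a | s a == x]| <= 2 /\ #|[pred a | t a == x]| <= 2),
      (forall a,
        (forall b1 b2, s b1 = t a -> ~~ R b1 a -> s b2 = t a -> ~~ R b2 a -> b1 = b2) /\
        (forall c1 c2, t c1 = s a -> ~~ R a c1 -> t c2 = s a -> ~~ R a c2 -> c1 = c2)),
      (forall a,
        (forall b1 b2, R b1 a -> R b2 a -> b1 = b2) /\
        (forall c1 c2, R a c1 -> R a c2 -> c1 = c2)) &
      (exists n, 0 < n /\ forall l, size l = n -> is_qpath l -> contains_rel l)].

(** signs: true stands for +1, false for -1 *)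
Variables (sg tg : A -> bool).

Definition sign_data : Prop :=
  [/\ (forall a b, a != b -> s a = s b -> sg a != sg b),
      (forall a b, a != b -> t a = t b -> tg a != tg b) &
      (forall a b, s a = t b -> (R a b <-> sg a = tg b))].

(** generalized paths: [inl (a, l)] is the nontrivial path a :: l
    (a = alpha_1 is the arrow at the end, last a l = alpha_n at the start);
    [inr (x, e)] is the trivial path at x with parameter e: it is read as
    1_{x,e} for permitted paths and as 1'_{x,e} for antipaths. *)
Definition gpath := ((A * seq A) + (V * bool))%type.

Definition w_arrows (w : gpath) : seq A :=
  match w with inl (a, l) => a :: l | inr _ => [::] end.
Definition w_len (w : gpath) : nat := size (w_arrows w).
Definition w_s (w : gpath) : V :=
  match w with inl (a, l) => s (last a l) | inr (x, _) => x end.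
Definition w_t (w : gpath) : V :=
  match w with inl (a, _) => t a | inr (x, _) => x end.
Definition w_sg (w : gpath) : bool :=
  match w with inl (a, l) => sg (last a l) | inr (_, e) => e end.
(* tau of a permitted path (trivial: tau 1_{x,e} = -e) *)
Definition w_tgP (w : gpath) : bool :=
  match w with inl (a, _) => tg a | inr (_, e) => ~~ e end.
(* tau of an antipath (trivial: tau 1'_{x,e} = e) *)
Definition w_tgN (w : gpath) : bool :=
  match w with inl (a, _) => tg a | inr (_, e) => e end.

Definition permitted (w : gpath) : bool :=
  match w with
  | inl (a, l) => sorted (fun b c => (s b == t c) && ~~ R b c) (a :: l)
  | inr _ => true end.
Definition antipath (w : gpath) : bool :=
  match w with
  | inl (a, l) => sorted (fun b c => (s b == t c) && R b c) (a :: l)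
  | inr _ => true end.

Definition maxP (w : gpath) : bool :=
  [&& permitted w,
      ~~ [exists a, (s a == w_t w) && (sg a == ~~ w_tgP w)] &
      ~~ [exists b, (t b == w_s w) && (tg b == ~~ w_sg w)]].

Definition maxN (w : gpath) : bool :=
  [&& antipath w,
      ~~ [exists a, (s a == w_t w) && (sg a == w_tgN w)] &
      ~~ [exists b, (t b == w_s w) && (tg b == w_sg w)]].

(** phi : M -> N and psi : N -> M ("the unique ...", via choice) *)
Definition phi (w : gpath) : gpath :=
  xget w [set w' | maxN w' /\ w_t w' = w_t w /\ w_tgN w' = ~~ w_tgP w].
Definition psi (w : gpath) : gpath :=
  xget w [set w' | maxP w' /\ w_s w' = w_s w /\ w_sg w' = ~~ w_sg w].
Definition Phi (w : gpath) : gpath := phi (psi w).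

Definition inC (a : A) : Prop := ~ exists w, maxN w /\ a \in w_arrows w.

Definition Psi (a : A) : A := xget a [set b | inC b /\ t b = s a /\ tg b = sg a].

Definition orbit_of {T : Type} (f : T -> T) (x : T) : set T :=
  [set y | exists k, y = iter k f x].

Definition Phi_orbits : set (set gpath) :=
  [set O | exists w, maxN w /\ O = orbit_of Phi w].
Definition Psi_orbits : set (set A) :=
  [set O | exists a, inC a /\ O = orbit_of Psi a].

Definition Phi_pq (O : set gpath) : nat * nat :=
  (#|` fset_set O|, \sum_(w <- fset_set O) w_len w)%N.
Definition Psi_pq (O : set A) : nat * nat := (0, #|` fset_set O|)%N.

Definition AGinv (p q : nat) : nat :=
  (#|` fset_set [set O | Phi_orbits O /\ Phi_pq O = (p, q)]|
   + #|` fset_set [set O | Psi_orbits O /\ Psi_pq O = (p, q)]|)%N.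

End GentleQuiver.

(* Main.v *)
Require Import Defs.
From mathcomp Require Import all_boot finmap.
From mathcomp Require Import boolp classical_sets cardinality.
From mathcomp Require Import zify.
Set Implicit Arguments. Unset Strict Implicit. Unset Printing Implicit Defensive.

Lemma FW (T : finType) (e : rel T)
  (lu : forall x x' y, e x y -> e x' y -> x = x') x :
  (exists l, path e x l /\ forall z, ~~ e (last x l) z) \/
  (exists y, e x y /\ connect e y x).
Proof.
move: (leqnn #|connect e x|); move: {2}#|connect e x| => n.
elim: n x => [|n IH] x Hn.
  have : 0 < #|connect e x| by apply/card_gt0P; exists x; rewrite inE connect0.
  by rewrite leqn0 in Hn; rewrite (eqP Hn).
case: (pickP (e x)) => [y exy | none].
  case: (boolP (connect e y x)) => cyx; first by right; exists y.
  have Hy : #|connect e y| <= n.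
    rewrite -ltnS; apply: leq_trans Hn; apply: proper_card; apply/properP; split.
      by apply/fintype.subsetP => z; rewrite !inE => cyz; apply: connect_trans (connect1 exy) cyz.
    by exists x; rewrite !inE ?connect0.
  case: (IH y Hy) => [[l [pl nl]] | [y' [eyy' cy'y]]].
    by left; exists (y :: l); split => //=; rewrite exy.
  exfalso; move/negP: cyx; apply.
  case/connectP: cy'y => q; case/lastP: q => [|q z] /=.
    by move=> _ eyy; rewrite -eyy in eyy'; rewrite -(lu _ _ _ exy eyy'); apply: connect0.
  rewrite rcons_path last_rcons => /andP [pq ez] yz; subst z.
  rewrite (lu _ _ _ exy ez).
  apply: connect_trans (connect1 eyy') _.
  by apply: (path_connect pq); apply: mem_last.
by left; exists [::]; split => //= z; rewrite none.
Qed.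

Section Cpart.
Local Open Scope fset_scope.

Lemma card_fset_set_pred (T : finType) (P : pred T) :
  #|` fset_set [set x | P x]%classic| = #|P|.
Proof.
rewrite -card_finset; congr (#|` _|); apply/fsetP => x.
rewrite in_fset_set; last exact: finite_finset.
apply/idP/idP => [/set_mem /= Px | ]; first by rewrite in_fset.
by rewrite in_fset => Px; apply: mem_set.
Qed.

Lemma size_sum_mem (T : finType) (l : seq T) : uniq l ->
  size l = (\sum_(a : T) (a \in l))%N.
Proof.
move=> U; rewrite -(card_uniqP U) -sum1_card big_mkcond /=.
by apply: eq_bigr => a _; case: (a \in l).
Qed.

Lemma count_uniq_has (T : eqType) (P : pred T) (L : seq T) : uniq L ->
  {in L &, forall x y, P x -> P y -> x = y} -> count P L = has P L.
Proof.
elim: L => [|x L IH] //= /andP [nx U] H.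
have IH' : count P L = has P L.
  by apply: IH => // x0 y xin yin; apply: H; rewrite inE ?xin ?yin orbT.
case: (boolP (P x)) => Px /=; last by rewrite IH' add0n.
suff -> : count P L = 0 by [].
apply/eqP; rewrite -leqn0 leqNgt -has_count; apply/hasP => - [y yin Py].
have yin2 : y \in x :: L by rewrite inE yin orbT.
have eyx := H y x yin2 (mem_head _ _) Py Px.
by rewrite -eyx yin in nx.
Qed.

Lemma sum_nat_count (T : Type) (P : pred T) (L : seq T) :
  (\sum_(w <- L) (P w : nat))%N = count P L.
Proof. by elim: L => [|x L IH]; rewrite ?big_nil ?big_cons //= IH. Qed.

Lemma sum_card_pred (T : finType) (P : pred T) :
  (\sum_(a : T) (P a : nat))%N = #|P|.
Proof. by rewrite -sum1_card [RHS]big_mkcond /=; apply: eq_bigr => a _; rewrite unfold_in; case: (P a). Qed.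

Lemma fs_pos (T : choiceType) (F : {fset T}) x : x \in F -> (0 < #|` F|)%N.
Proof. by move=> xF; rewrite -(cardfs1 x); apply: fsubset_leq_card; rewrite fsub1set. Qed.

Lemma fs_le1 (T : choiceType) (F : {fset T}) x y :
  x \in F -> y \in F -> (#|` F| <= 1)%N -> x = y.
Proof.
move=> xF yF H; apply/eqP; apply: contraLR H => ne; rewrite -ltnNge.
have : (#|` [fset x; y]| <= #|` F|)%N.
  by apply: fsubset_leq_card; rewrite fsubUset !fsub1set xF yF.
by rewrite cardfs2 ne.
Qed.

Lemma memS (T : choiceType) (S : set T) x : finite_set S -> S x -> x \in fset_set S.
Proof. by move=> fS Sx; rewrite in_fset_set //; apply: mem_set. Qed.

Lemma memS' (T : choiceType) (S : set T) x : finite_set S -> x \in fset_set S -> S x.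
Proof. by move=> fS; rewrite in_fset_set // => /set_mem. Qed.

End Cpart.

Section Graph.
Variables (V A : finType) (s t : A -> V).

Lemma qadj_sym (P : pred A) : symmetric (qadj s t P).
Proof.
move=> x y; apply: eq_existsb => a; congr (_ && _); exact: orbC.
Qed.

Lemma conn_sub (P1 P2 : pred A) : connected_on s t P1 ->
  (forall a, P1 a -> ~~ P2 a -> connect (qadj s t P2) (s a) (t a)) ->
  connected_on s t P2.
Proof.
move=> C1 H x y; apply: connect_sub (C1 x y) => u v /existsP [a /andP [P1a E]].
have csym := sym_connect_sym (qadj_sym P2).
case: (boolP (P2 a)) => P2a.
  by apply: connect1; apply/existsP; exists a; rewrite P2a.
have := H a P1a P2a.
by case/orP: E => /andP [/eqP <- /eqP <-] // ; rewrite csym.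
Qed.

Lemma conn_count (Q : pred A) : connected_on s t Q -> #|V| <= #|Q| + 1.
Proof.
move=> CQ; case: (pickP (@predT V)) => [x0 _ | none]; last first.
  by rewrite (eq_card0 none).
pose e := qadj s t Q.
pose pk y k := [exists p : k.-tuple V, path e y p && (last y p == x0)].
have exk : forall y, exists k, pk y k.
  move=> y; case/connectP: (CQ y x0) => p pp lp.
  exists (size p); apply/existsP; exists (in_tuple p); by rewrite pp -lp eqxx.
pose d y := ex_minn (exk y).
have d1 : forall y, pk y (d y) by move=> y; rewrite /d; case: ex_minnP.
have d2 : forall y k, pk y k -> d y <= k by move=> y k; rewrite /d; case: ex_minnP => m _ H /H.
pose E y := [pick a | Q a && (((s a == y) && (d (t a) < d y)) || ((t a == y) && (d (s a) < d y)))].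
have Eex : forall y, y != x0 -> exists a, Q a && (((s a == y) && (d (t a) < d y)) || ((t a == y) && (d (s a) < d y))).
  move=> y ny; have /existsP [p /andP [pp /eqP lp]] := d1 y.
  case: p pp lp => [[|z p'] /= szp] pp lp.
    by rewrite lp eqxx in ny.
  case/andP: pp => eyz pp'.
  have dz : d z < d y.
    have -> : d y = (size p').+1 by rewrite -(eqP szp).
    by rewrite ltnS; apply: d2; apply/existsP; exists (in_tuple p'); rewrite pp' lp eqxx.
  case/existsP: eyz => a /andP [Qa /orP [/andP [/eqP sa /eqP ta] | /andP [/eqP sa /eqP ta]]].
    by exists a; rewrite Qa sa ta eqxx dz.
  by exists a; rewrite Qa sa ta eqxx dz orbT.
have Einj : {in [set~ x0] &, injective E}.
  move=> y1 y2; rewrite !inE => n1 n2.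
  rewrite /E; case: pickP => [a1 H1|]; last by have [a Ha] := Eex y1 n1 => /(_ a); rewrite Ha.
  case: pickP => [a2 H2|]; last by have [a Ha] := Eex y2 n2 => /(_ a); rewrite Ha.
  move=> [ea]; subst a2.
  case/andP: H1 => _ /orP [/andP [/eqP s1 l1] | /andP [/eqP t1 l1]];
  case/andP: H2 => _ /orP [/andP [/eqP s2 l2] | /andP [/eqP t2 l2]].
  - by rewrite -s1 -s2.
  - by move: l1 l2; rewrite s1 t2 => l1 l2; move: (ltn_trans l1 l2); rewrite ltnn.
  - by move: l1 l2; rewrite t1 s2 => l1 l2; move: (ltn_trans l1 l2); rewrite ltnn.
  - by rewrite -t1 -t2.
have : #|[set E y | y in [set~ x0]]| <= #|[set Some a | a in Q]|.
  apply: subset_leq_card; apply/fintype.subsetP => o /imsetP [y]; rewrite !inE => ny ->.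
  rewrite /E; case: pickP => [a /andP [Qa _]|]; last by have [a Ha] := Eex y ny => /(_ a); rewrite Ha.
  by apply/imsetP; exists a.
rewrite card_in_imset // card_imset; last by move=> ? ? [].
rewrite cardsC1 addn1 => H.
have V0 : 0 < #|V| by apply/card_gt0P; exists x0.
by rewrite -(prednK V0) ltnS.
Qed.
End Graph.

Section Main.
Variables (V A : finType) (s t : A -> V) (R : rel A) (sg tg : A -> bool).
Hypothesis HRst : forall a b, R a b -> s a = t b.
Hypothesis Hpu : forall x x' y, R x y -> R x' y -> x = x'.
Hypothesis Hsu : forall x y y', R x y -> R x y' -> y = y'.
Hypothesis Hsgs : forall a b, a != b -> s a = s b -> sg a != sg b.
Hypothesis Htgt : forall a b, a != b -> t a = t b -> tg a != tg b.
Hypothesis HRsg : forall a b, s a = t b -> (R a b <-> sg a = tg b).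

Local Notation N := (maxN s t R sg tg).
Definition slot (w : gpath V A) : V * bool := (w_t t w, w_tgN tg w).
Definition free (x : V * bool) : bool := ~~ [exists a, (s a == x.1) && (sg a == x.2)].

Lemma path_eqR h l : path (fun b c => (s b == t c) && R b c) h l = path R h l.
Proof.
apply: eq_path => b c; case: (boolP (R b c)) => Rbc; last by rewrite andbF.
by rewrite (HRst Rbc) eqxx.
Qed.

Lemma ex_pred h : [exists a, (s a == t h) && (sg a == tg h)] = [exists a, R a h].
Proof.
apply: eq_existsb => a; apply/idP/idP.
  by case/andP => /eqP e1 /eqP e2; apply/(HRsg e1).
by move=> Rah; rewrite (HRst Rah) eqxx /=; apply/eqP/(HRsg (HRst Rah)).
Qed.

Lemma ex_succ x : [exists b, (t b == s x) && (tg b == sg x)] = [exists b, R x b].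
Proof.
apply: eq_existsb => b; apply/idP/idP.
  by case/andP => /eqP e1 /eqP e2; apply/(HRsg (esym e1)).
by move=> Rxb; rewrite (HRst Rxb) eqxx /=; apply/eqP/esym/(HRsg (HRst Rxb)).
Qed.

Lemma maxN_inl h l : N (inl (h, l)) =
  [&& path R h l, ~~ [exists a, R a h] & ~~ [exists b, R (last h l) b]].
Proof. by rewrite /maxN /= path_eqR ex_pred ex_succ. Qed.

Lemma N_free w : N w -> free (slot w).
Proof. by case/and3P. Qed.

Lemma fwd_uniq h l1 l2 : path R h l1 -> path R h l2 ->
  ~~ [exists b, R (last h l1) b] -> ~~ [exists b, R (last h l2) b] -> l1 = l2.
Proof.
elim: l1 h l2 => [|c1 l1 IH] h [|c2 l2] //=.
- by move=> _ /andP [Rhc _] /existsPn /(_ c2); rewrite Rhc.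
- by move=> /andP [Rhc _] _ _ /existsPn /(_ c1); rewrite Rhc.
move=> /andP [R1 p1] /andP [R2 p2] n1 n2.
have e := Hsu R1 R2; subst c2; congr (_ :: _); exact: IH p1 p2 n1 n2.
Qed.

Lemma N_uniq w1 w2 : N w1 -> N w2 -> slot w1 = slot w2 -> w1 = w2.
Proof.
case: w1 => [[h1 l1]|[x1 e1]]; case: w2 => [[h2 l2]|[x2 e2]] //=.
- rewrite !maxN_inl /slot /= => /and3P [p1 _ n1] /and3P [p2 _ n2] [et etg].
  have eh : h1 = h2.
    by case: (eqVneq h1 h2) => // ne; have := Htgt ne et; rewrite etg eqxx.
  subst h2; by rewrite (fwd_uniq p1 p2 n1 n2).
- rewrite /maxN /slot /= => _ /andP [_ H] [f1 f2].
  by move/existsPn: H => /(_ h1); rewrite f1 f2 !eqxx.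
- rewrite /maxN /slot /= => /andP [_ H] _ [f1 f2].
  by move/existsPn: H => /(_ h2); rewrite -f1 -f2 !eqxx.
by move=> _ _ [-> ->].
Qed.

Lemma N_exists x : free x -> exists w, N w /\ slot w = x.
Proof.
case: x => x e Hf.
case: (pickP (fun b => (t b == x) && (tg b == e))) => [b /andP [/eqP tb /eqP tgb] | none].
  have nopred : ~~ [exists a, R a b].
    apply/existsPn => a; apply/negP => Rab; move/existsPn: Hf => /(_ a) /=.
    by rewrite (HRst Rab) tb eqxx /= -tgb (iffLR (HRsg (HRst Rab)) Rab) eqxx.
  case: (FW Hpu b) => [[l [pl nl]] | [y [Rby cyb]]].
    exists (inl (b, l)); split; last by rewrite /slot /= tb tgb.
    by rewrite maxN_inl pl nopred /=; apply/existsPn.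
  exfalso; move/existsPn: nopred; case/connectP: cyb => q; case/lastP: q => [|q z] /=.
    by move=> _ ey; subst y => /(_ b); rewrite Rby.
  by rewrite rcons_path last_rcons => /andP [_ ez] ebz; subst z => /(_ (last y q)); rewrite ez.
exists (inr (x, e)); split => //.
rewrite /maxN /=; move: Hf; rewrite /free /= => -> /=; apply/existsPn => b; by rewrite none.
Qed.

Lemma split_path h l x : path R h l -> x \in h :: l ->
  exists p q, [/\ l = p ++ q, last h p = x, path R h p & path R x q].
Proof.
elim: l h => [|c l IH] h /=.
  by move=> _; rewrite inE => /eqP ->; exists [::], [::].
move=> /andP [Rhc pcl]; rewrite inE; case/orP => [/eqP ->|xin].
  by exists [::], (c :: l); split => //=; rewrite Rhc.
have [p [q [-> lp pp pq]]] := IH c pcl xin.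
by exists (c :: p), q; split => //=; rewrite Rhc.
Qed.

Lemma BU x y p q : path R x p -> path R y q -> last x p = last y q ->
  ~~ [exists a, R a x] -> ~~ [exists a, R a y] -> x = y.
Proof.
elim/last_ind: p q => [|p z1 IH] q.
  case/lastP: q => [|q z2] //=.
  rewrite rcons_path last_rcons => _ /andP [_ R2] ex; subst z2.
  by move=> /existsPn /(_ (last y q)); rewrite R2.
case/lastP: q => [|q z2].
  rewrite rcons_path last_rcons => /andP [_ R1] _ /= ex; subst z1.
  by move=> _ /existsPn /(_ (last x p)); rewrite R1.
rewrite !rcons_path !last_rcons => /andP [p1 R1] /andP [p2 R2] ez; subst z2.
by apply: IH p1 p2 (Hpu R1 R2).
Qed.

Lemma U1 h l : path R h l -> ~~ [exists a, R a h] -> uniq (h :: l).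
Proof.
move=> + np; elim/last_ind: l => [|l z IH] //.
rewrite rcons_path => /andP [pl Rz].
rewrite -rcons_cons rcons_uniq IH // andbT.
apply/negP => zin.
rewrite inE in zin; case/orP: zin => [/eqP ez | zin].
  by subst z; move/existsPn: np => /(_ (last h l)); rewrite Rz.
case/splitPr: zin pl Rz (IH pl) => l1 l2.
rewrite cat_path /= => /andP [_ /andP [Ru _]].
rewrite last_cat /= => Rz.
have eu := Hpu Ru Rz.
move=> U; move: (U : uniq ((h :: l1) ++ z :: l2)); rewrite cat_uniq => /and3P [_ /hasPn H _].
by have := H (last z l2) (mem_last z l2); rewrite -eu mem_last.
Qed.


Local Notation inCa := (inC s t R sg tg).
Local Notation Psia := (Psi s t R sg tg).

Lemma lastrev (x : A) l : last (last x l) (rev (belast x l)) = x.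
Proof. by case: l => [|c l] //=; rewrite rev_cons last_rcons. Qed.

Lemma notC_ex x : ~ inCa x -> exists w, N w /\ x \in w_arrows w.
Proof. by move/contrapT. Qed.

Lemma notC_succ x b : ~ inCa x -> R x b -> ~ inCa b.
Proof.
move/notC_ex => [[[h l]|[y e]] []] //=; rewrite maxN_inl => /and3P [pl np ns] xin Rxb.
have [p [q [el lp pp pq]]] := split_path pl xin.
case: q el pq => [|c q] el pq.
  move/existsPn: ns => /(_ b); rewrite el cats0 lp Rxb //.
move: pq => /= /andP [Rxc _]; have ec := Hsu Rxc Rxb; subst c.
move=> Cb; apply: Cb; exists (inl (h, l)); split; first by rewrite maxN_inl pl np ns.
by rewrite /= el inE mem_cat inE eqxx /= !orbT.
Qed.

Lemma C_succ x : inCa x -> exists b, R x b.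
Proof.
move=> Cx; apply: contrapT => nos; apply: Cx.
have luc : forall a a' y, (fun a b => R b a) a y -> (fun a b => R b a) a' y -> a = a'.
  by move=> a a' y /= H1 H2; apply: Hsu H1 H2.
case: (FW luc x) => [[l [pl nl]] | [y [Ryx cyx]]].
  exists (inl (last x l, rev (belast x l))); split; last first.
    by rewrite /= -{1}(lastrev x l) mem_last.
  rewrite maxN_inl lastrev; apply/and3P; split.
  - by rewrite rev_path.
  - by apply/existsPn => z; apply: nl.
  - by apply/existsPn => z; apply/negP => Rxz; apply: nos; exists z.
case/connectP: cyx => q; case/lastP: q => [|q z] /=.
  by move=> _ ex; subst y; exfalso; apply: nos; exists x.
rewrite rcons_path last_rcons => /andP [_ ez] exz; subst z.
by exfalso; apply: nos; exists (last y q).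
Qed.

Lemma C_succC x b : inCa x -> R x b -> inCa b.
Proof.
move=> Cx Rxb; apply: contrapT => /notC_ex [[[h l]|[y e]] []] //=.
rewrite maxN_inl => /and3P [pl np ns] bin.
have [p [q [el lp pp pq]]] := split_path pl bin.
case/lastP: p el lp pp => [|p z] el lp pp.
  by move/existsPn: np => /(_ x); rewrite /= in lp; rewrite lp Rxb.
rewrite last_rcons in lp; subst z.
move: pp; rewrite rcons_path => /andP [pp Rzb].
have ex := Hpu Rzb Rxb.
apply: Cx; exists (inl (h, l)); split; first by rewrite maxN_inl pl np ns.
rewrite /= el -cats1 -catA -cat_cons mem_cat -ex mem_last //.
Qed.

Lemma Psi_R x : inCa x -> R x (Psia x) /\ inCa (Psia x).
Proof.
move=> Cx; have [b Rxb] := C_succ Cx.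
have Cb := C_succC Cx Rxb.
suff -> : Psia x = b by [].
rewrite /Psi; apply: xget_unique.
  by split => //; split; [rewrite (HRst Rxb) | apply/esym/(HRsg (HRst Rxb))].
move=> y [_ [ty tgy]]; apply: Hsu _ Rxb; apply/(HRsg (esym ty)); by rewrite tgy.
Qed.

Lemma Psi_NC x : ~ inCa x -> Psia x = x.
Proof.
move=> NCx; rewrite /Psi; apply: xgetPN => y [Cy [ty tgy]].
have Rxy : R x y by apply/(HRsg (esym ty)); rewrite tgy.
exact: notC_succ NCx Rxy Cy.
Qed.

Lemma Psi_inj : injective Psia.
Proof.
move=> x y.
case: (pselect (inCa x)) => Cx; case: (pselect (inCa y)) => Cy.
- move=> e; have [R1 _] := Psi_R Cx; have [R2 _] := Psi_R Cy.
  by rewrite e in R1; apply: Hpu R1 R2.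
- by rewrite (Psi_NC Cy) => e; have [_ C2] := Psi_R Cx; rewrite e in C2.
- by rewrite (Psi_NC Cx) => e; have [_ C2] := Psi_R Cy; rewrite -e in C2.
- by rewrite (Psi_NC Cx) (Psi_NC Cy).
Qed.

Local Notation phia := (phi s t R sg tg).
Local Notation psia := (psi s t R sg tg).
Local Notation Phia := (Phi s t R sg tg).

Lemma phi_N w : N w \/ maxP s t R sg tg w -> N (phia w).
Proof.
rewrite /phi; case: xgetP => [y _ [Ny _] // | none].
case => // /and3P [_ Hf _].
have [w' [Nw' sw']] := @N_exists (w_t t w, ~~ w_tgP tg w) Hf.
by exfalso; apply: (none w'); case: sw' => e1 e2; split.
Qed.

Lemma Phi_N w : N w -> N (Phia w).
Proof.
move=> Nw; rewrite /Phi /psi; case: xgetP => [y _ [My _] | _].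
  by apply: phi_N; right.
by apply: phi_N; left.
Qed.

Lemma iter_Phi_N k w : N w -> N (iter k Phia w).
Proof. by move=> Nw; elim: k => //= k IH; apply: Phi_N. Qed.

Definition Nset : set (gpath V A) := [set w | N w]%classic.

Definition ext (x : V * bool) : gpath V A :=
  xget (inr x) [set w | N w /\ slot w = x]%classic.

Lemma extK w : N w -> ext (slot w) = w.
Proof.
move=> Nw; apply: xget_unique => //.
by move=> y [Ny sy]; apply: N_uniq.
Qed.

Lemma finite_Nset : finite_set Nset.
Proof.
apply: (@sub_finite_set _ _ (ext @` setT)%classic); last first.
  by apply: finite_image; exact: finite_finset.
by move=> w Nw; exists (slot w) => //; apply: extK.
Qed.

Lemma card_N : #|` fset_set Nset| = #|[pred x | free x]|.
Proof.
rewrite -card_fset_set_pred.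
have -> : [set x | free x]%classic = (slot @` Nset)%classic.
  apply/seteqP; split => x /=.
    by move=> /N_exists [w [Nw sw]]; exists w.
  by move=> [w Nw <-]; apply: N_free.
rewrite fset_set_image; last exact: finite_Nset.
apply/esym/eqP/card_in_imfsetP => w1 w2.
rewrite !in_fset_set; [|exact: finite_Nset|exact: finite_Nset].
by move=> /set_mem N1 /set_mem N2; apply: N_uniq.
Qed.

Lemma arrows_uniq w : N w -> uniq (w_arrows w).
Proof.
case: w => [[h l]|[x e]] //=; rewrite maxN_inl => /and3P [pl np _].
exact: U1.
Qed.

Lemma head_path h l a : N (inl (h, l)) -> a \in h :: l ->
  exists p, [/\ path R h p, last h p = a & ~~ [exists b, R b h]].
Proof.
rewrite maxN_inl => /and3P [pl np _] ain.
have [p [q [_ lp pp _]]] := split_path pl ain.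
by exists p.
Qed.

Lemma arrows_disj w1 w2 a : N w1 -> N w2 ->
  a \in w_arrows w1 -> a \in w_arrows w2 -> w1 = w2.
Proof.
case: w1 => [[h1 l1]|[x e]] //; case: w2 => [[h2 l2]|[y f]] // N1 N2 a1 a2.
have [p1 [pp1 lp1 np1]] := head_path N1 a1.
have [p2 [pp2 lp2 np2]] := head_path N2 a2.
have eh := BU pp1 pp2 (etrans lp1 (esym lp2)) np1 np2; subst h2.
by apply: N_uniq.
Qed.

Lemma sum_N : (\sum_(w <- fset_set Nset) w_len w)%N = #|[pred a | ~~ `[< inCa a >] ]|.
Proof.
have memN : forall w, (w \in fset_set Nset) = N w.
  move=> w; rewrite in_fset_set; last exact: finite_Nset.
  by apply/idP/idP => [/set_mem // | Nw]; apply: mem_set.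
rewrite (eq_big_seq (fun w => \sum_(a : A) (a \in w_arrows w))%N); last first.
  by move=> w; rewrite memN => Nw; rewrite /w_len; apply: size_sum_mem; apply: arrows_uniq.
rewrite exchange_big /= -sum_card_pred; apply: eq_bigr => a _.
rewrite sum_nat_count count_uniq_has; last first.
- move=> w1 w2; rewrite !memN => N1 N2; exact: arrows_disj.
- exact: fset_uniq.
congr (nat_of_bool _); apply/idP/idP.
  move=> /hasP [w]; rewrite memN => Nw ain; apply/asboolPn => Ca; apply: Ca.
  by exists w.
move=> /asboolPn /notC_ex [w [Nw ain]]; apply/hasP; exists w => //.
by rewrite memN.
Qed.

Lemma card_FO : #|[pred x | free x]| + #|A| = 2 * #|V|.
Proof.
pose f := fun a : A => (s a, sg a).
have finj : injective f.
  move=> a b [e1 e2]; case: (eqVneq a b) => // ne.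
  by have := Hsgs ne e1; rewrite e2 eqxx.
have -> : #|[pred x | free x]| = #|[predC codom f]|.
  apply: eq_card => -[x e]; rewrite !inE /free /=; congr (~~ _).
  apply/existsP/codomP => [[a /andP [/eqP sa /eqP ga]]|[a [-> ->]]].
    by exists a; rewrite /f sa ga.
  by exists a; rewrite !eqxx.
rewrite -(card_codom finj) addnC cardC card_prod card_bool mulnC.
by [].
Qed.

Lemma orbit_fconnect a : orbit_of Psia a = [set y | fconnect Psia a y]%classic.
Proof.
apply/seteqP; split => y /=.
  by move=> [k ->]; apply: fconnect_iter.
by move=> H; exists (findex Psia a y); rewrite iter_findex.
Qed.

Lemma card_orbit a : #|` fset_set (orbit_of Psia a)| = order Psia a.
Proof. by rewrite orbit_fconnect card_fset_set_pred. Qed.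

Lemma iterC k a : inCa a -> inCa (iter k Psia a).
Proof. by move=> Ca; elim: k => //= k IH; have [_ ?] := Psi_R IH. Qed.

Lemma iter_ne a i : 0 < i < order Psia a -> iter i Psia a != a.
Proof.
case/andP => i0 io; apply/eqP => e.
by have := findex_iter io; rewrite e findex0 => i0'; rewrite -i0' in i0.
Qed.

Lemma trail r (Q : pred A) : inCa r ->
  (forall i, 0 < i < order Psia r -> Q (iter i Psia r)) ->
  connect (qadj s t Q) (s r) (t r).
Proof.
move=> Cr HQ.
have key : forall i, i < order Psia r -> connect (qadj s t Q) (s r) (s (iter i Psia r)).
  elim => [|i IH] Hi //.
  apply: connect_trans (IH (ltnW Hi)) _.
  have [Ri _] := Psi_R (iterC (k:=i) Cr).
  rewrite (HRst Ri) -iterS; apply: connect1; apply/existsP; exists (iter i.+1 Psia r).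
  by rewrite HQ //= !eqxx orbT.
have o0 := order_gt0 Psia r.
have := key (order Psia r).-1; rewrite ltn_predL o0 => /(_ isT).
have [Ri _] := Psi_R (iterC (k:=(order Psia r).-1) Cr).
rewrite (HRst Ri) -iterS prednK // iter_order //; exact: Psi_inj.
Qed.

Lemma key_conn (Hc : connected_on s t predT) : forall a, inCa a -> connected_on s t (predC1 a).
Proof.
move=> a Ca; apply: (conn_sub Hc) => e _; rewrite negbK => /eqP ->.
by apply: trail => // i Hi; rewrite /= iter_ne.
Qed.

Variables (m p : nat).
Hypothesis Hf : forall a b : nat,
  AGinv s t R sg tg a b = (m * ((a == 0) && (b == 3)) + ((a == p + m + 2) && (b == p)))%N.

Definition PhiS a b := [set O | Phi_orbits s t R sg tg O /\ Phi_pq O = (a, b)]%classic.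
Definition PsiS a b := [set O | Psi_orbits s t R sg tg O /\ Psi_pq O = (a, b)]%classic.

Lemma Hf' a b : (#|` fset_set (PhiS a b)| + #|` fset_set (PsiS a b)|)%N =
  (m * ((a == 0) && (b == 3)) + ((a == p + m + 2) && (b == p)))%N.
Proof. exact: Hf. Qed.

Lemma finite_PhiS a b : finite_set (PhiS a b).
Proof.
apply: (@sub_finite_set _ _ ((orbit_of Phia) @` Nset)%classic); last first.
  by apply: finite_image; exact: finite_Nset.
by move=> O [[w [Nw ->]] _]; exists w.
Qed.

Lemma finite_PsiS a b : finite_set (PsiS a b).
Proof.
apply: (@sub_finite_set _ _ ((orbit_of Psia) @` setT)%classic); last first.
  by apply: finite_image; exact: finite_finset.
by move=> O [[w [_ ->]] _]; exists w.
Qed.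

Lemma orbitPhi_sub w : N w -> (orbit_of Phia w `<=` Nset)%classic.
Proof. by move=> Nw y [k ->]; apply: iter_Phi_N. Qed.

Lemma orbitPhi_fin w : N w -> finite_set (orbit_of Phia w).
Proof. by move=> Nw; apply: sub_finite_set (orbitPhi_sub Nw) finite_Nset. Qed.

Lemma Phi_orbit_pq w : N w ->
  Phi_pq (orbit_of Phia w) = (p + m + 2, p)%N /\ (#|` fset_set (PhiS (p + m + 2) p)| <= 1)%N.
Proof.
move=> Nw; set O := orbit_of Phia w.
have a0 : (0 < (Phi_pq O).1)%N.
  by apply: (@fs_pos _ _ w); apply: memS; [exact: orbitPhi_fin | exists 0].
case E: (Phi_pq O) a0 => [a b] /= a0.
have OS : O \in fset_set (PhiS a b) by apply: memS; [exact: finite_PhiS | split => //; exists w].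
have H := Hf' a b; have pos := fs_pos OS.
have an : (a == 0) = false by rewrite eqn0Ngt a0.
rewrite an muln0 add0n in H.
case Hb: ((a == p + m + 2) && (b == p)); rewrite Hb in H.
  case/andP: Hb => /eqP ea /eqP eb; subst a b; split => //.
  by move: H; set u := #|` fset_set (PhiS _ _)|; set v := #|` fset_set (PsiS _ _)|; lia.
by exfalso; move/eqP: H; rewrite addn_eq0 => /andP [/eqP h _]; rewrite h in pos.
Qed.

Lemma orbits_eq w1 w2 : N w1 -> N w2 -> orbit_of Phia w1 = orbit_of Phia w2.
Proof.
move=> N1 N2; have [e1 H] := Phi_orbit_pq N1; have [e2 _] := Phi_orbit_pq N2.
apply: (fs_le1 _ _ H); apply: memS; try exact: finite_PhiS.
  by split => //; exists w1.
by split => //; exists w2.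
Qed.

Lemma N_nonempty : exists w, N w.
Proof.
have H := Hf' (p + m + 2) p.
have E0 : (p + m + 2 == 0) = false by rewrite addn2.
rewrite E0 muln0 !eqxx add0n /= in H.
have E1 : PsiS (p + m + 2) p = set0.
  by apply/seteqP; split => // O [_]; rewrite /Psi_pq => -[] /eqP; rewrite addn2.
rewrite E1 fset_set0 cardfs0 addn0 in H.
have : fset_set (PhiS (p + m + 2) p) != fset0 by rewrite -cardfs_eq0 H.
by case/fset0Pn => O /(memS' (finite_PhiS _ _)) [[w [Nw _]] _]; exists w.
Qed.

Lemma Nset_pq : #|` fset_set Nset| = (p + m + 2)%N /\ (\sum_(w <- fset_set Nset) w_len w)%N = p.
Proof.
have [w0 N0] := N_nonempty.
have -> : Nset = orbit_of Phia w0.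
  apply/seteqP; split; last exact: orbitPhi_sub.
  by move=> w Nw; rewrite -(orbits_eq Nw N0); exists 0.
by have [[-> ->] _] := Phi_orbit_pq N0.
Qed.

Lemma Psi_orbit3 a : inCa a -> order Psia a = 3.
Proof.
move=> Ca; set O := orbit_of Psia a.
have OS : O \in fset_set (PsiS 0 (order Psia a)).
  apply: memS; first exact: finite_PsiS.
  by split; [exists a | rewrite /Psi_pq card_orbit].
have H := Hf' 0 (order Psia a); have pos := fs_pos OS.
have E0 : (0 == p + m + 2) = false by rewrite addn2.
rewrite E0 addn0 /= in H.
case: eqP H => // _; rewrite muln0 => H.
by exfalso; move/eqP: H; rewrite addn_eq0 => /andP [_ /eqP h]; rewrite h in pos.
Qed.

Lemma m_eq : #|` fset_set (PsiS 0 3)| = m.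
Proof.
have H := Hf' 0 3.
have E0 : (0 == p + m + 2) = false by rewrite addn2.
rewrite E0 muln1 addn0 in H.
suff : PhiS 0 3 = set0 by move=> E; rewrite E fset_set0 cardfs0 in H.
apply/seteqP; split => // O [[w [Nw ->]]].
by have [-> _] := Phi_orbit_pq Nw; case => /eqP; rewrite addn2.
Qed.

Definition Rp : pred A := [pred r | `[< inCa r >] && (froot Psia r == r)].

Lemma Rp_le : #|Rp| <= m.
Proof.
rewrite -m_eq -card_fset_set_pred.
have fin1 : finite_set [set x | Rp x]%classic by exact: finite_finset.
have -> : #|` fset_set [set x | Rp x]%classic| =
          #|` fset_set ((orbit_of Psia) @` [set x | Rp x])%classic|.
  rewrite fset_set_image //; apply/esym/eqP/card_in_imfsetP => r1 r2.
  move=> /(memS' fin1) /= /andP [_ /eqP e1] /(memS' fin1) /= /andP [_ /eqP e2] eo.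
  have : orbit_of Psia r1 r2 by rewrite eo; exists 0.
  move=> [k ek]; have c12 : fconnect Psia r1 r2 by rewrite ek; apply: fconnect_iter.
  by rewrite -e1 -e2; apply/(rootP (fconnect_sym Psi_inj)).
apply: fsubset_leq_card; rewrite -fset_set_sub; last exact: finite_PsiS.
  move=> O [r /= /andP [/asboolP Cr _] <-]; split; first by exists r.
  by rewrite /Psi_pq card_orbit Psi_orbit3.
exact: finite_image.
Qed.

Lemma C_3Rp : #|[pred a | `[< inCa a >]]| = 3 * #|Rp|.
Proof.
rewrite -(@fcard_order_set _ Psia Psi_inj 3 [pred a | `[< inCa a >]]).
- rewrite mulnC; congr (_ * _); apply: eq_card => r; rewrite !inE /=.
  by rewrite andbC.
- apply/fintype.subsetP => r; rewrite !inE => Cr; rewrite Psi_orbit3 //; exact/asboolP.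
- move=> x y /eqP <-; rewrite !inE.
  case: (pselect (inCa x)) => Cx.
    by have [_ C2] := Psi_R Cx; rewrite !asboolT.
  by rewrite Psi_NC.
Qed.

Lemma NC_conn a : ~ inCa a -> ~ connected_on s t (predC1 a).
Proof.
move=> NCa Ca1.
pose P' := [pred e | (e != a) && ~~ Rp e].
have CP : connected_on s t P'.
  apply: (conn_sub Ca1) => e /= ea; rewrite ea /= negbK => Re.
  have Ce : inCa e by case/andP: Re => /asboolP.
  case/andP: Re => _ /eqP re.
  apply: trail => // i Hi; apply/andP; split.
    by apply/eqP => ei; apply: NCa; rewrite -ei; apply: iterC.
  apply/negP => /andP [_ /eqP er].
  have c : fconnect Psia e (iter i Psia e) by apply: fconnect_iter.
  have := (rootP (fconnect_sym Psi_inj) c); rewrite er re => ei.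
  by have := iter_ne Hi; rewrite -ei eqxx.
have cnt := conn_count CP.
have c1 : #|A| = (#|Rp| + #|P'| + 1)%N.
  rewrite -(cardC Rp) (cardD1 a [predC Rp]).
  have -> : a \in [predC Rp] by apply/negP => /andP [/asboolP].
  by rewrite add1n addn1 -addnS; congr (_ + _.+1); apply: eq_card => e.
have c2 := card_FO.
have [c3 c4] := Nset_pq; rewrite card_N in c3; rewrite sum_N in c4.
have c5 : (#|[pred a | ~~ `[< inCa a >]]| + #|[pred a | `[< inCa a >]]|)%N = #|A|.
  rewrite addnC -(cardC [pred a | `[< inCa a >]]); congr (_ + _).
have c6 := C_3Rp; have c7 := Rp_le.
move: cnt c1 c2 c3 c4 c5 c6 c7.
set x1 := #|A|; set x2 := #|V|; set x3 := #|Rp|; set x4 := #|P'|.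
set x5 := #|[pred x | free x]|; set x6 := #|[pred a | ~~ `[< inCa a >]]|.
set x7 := #|[pred a | `[< inCa a >]]|.
lia.
Qed.

Lemma main_iff (Hc : connected_on s t predT) al :
  (branch_arrow s t al <-> ~ inCa al) /\ (cycle_arrow s t al <-> inCa al).
Proof.
have K1 := key_conn Hc (a := al); have K2 := NC_conn (a := al).
rewrite /cycle_arrow /branch_arrow; split; split.
- by move=> nc Ca; apply: nc; apply: K1.
- exact: K2.
- by move=> nn; apply: contrapT => NC; apply: nn; apply: K2.
- by move=> Ca nc; apply: nc; apply: K1.
Qed.

End Main.

Theorem lemma6p3 (V A : finType) (s t : A -> V) (R : rel A) (sg tg : A -> bool)
    (m p : nat) :
  gentle s t R ->
  sign_data s t R sg tg ->
  (forall a b : nat,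
      AGinv s t R sg tg a b
      = (m * ((a == 0) && (b == 3)) + ((a == p + m + 2) && (b == p)))%N) ->
  forall al : A,
    (branch_arrow s t al <-> ~ inC s t R sg tg al) /\
    (cycle_arrow s t al <-> inC s t R sg tg al).
Proof.
move=> [Hc [HRst _ _ H3 _]] [Hsgs Htgt HRsg] Hf al.
have Hpu : forall x x' y, R x y -> R x' y -> x = x' by move=> x x' y; apply: (H3 y).1.
have Hsu : forall x y y', R x y -> R x y' -> y = y' by move=> x y y'; apply: (H3 x).2.
exact: (main_iff HRst Hpu Hsu Hsgs Htgt HRsg Hf Hc al).
Qed.
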